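(* Let $H_1$, $G_L$, the Coxeter generators $a_1,\dots,a_5,a_{1'}$ and the labels $1,\dots,6,\overline1,\dots,\overline6$ of $G_L\backslash H_1$ be as in the context, with $H_1$ acting on $G_L\backslash H_1$ by right multiplication. Then: (a) for $1\le k\le 5$, the generator $a_k$ exchanges the coset labeled $k$ with the coset labeled $k+1$, exchanges $\overline{k}$ with $\overline{k+1}$, and fixes the other cosets; (b) the generator $a_{1'}$ exchanges the coset labeled $1$ with the coset labeled $\overline2$, exchanges $\overline1$ with $2$, and fixes the other cosets.
   Context: Let $V=\{(A,B,C,D,E,F,G)^T\in\mathbb{C}^7: E+F+G-A-B-C-D=1\}$. A transposition $(ij)\in S_7$ is identified with the $7\times7$ permutation matrix swapping coordinates $i$ and $j$. Let $X_1\in GL(7,\mathbb{C})$ have rows $e_1$, $-e_3+e_5$, $-e_2+e_5$, $e_4$, $e_5$, $-e_2-e_3+e_5+e_6$, $-e_2-e_3+e_5+e_7$, so that for $\vec x\in V$, $X_1\vec x=(A,E-C,E-B,D,E,1+A+D-G,1+A+D-F)^T$. Let $H_1=\langle(12),(23),(34),(56),(67),X_1\rangle\cong W(D_6)$, with Coxeter generators $a_1=(23),a_2=(34),a_3=X_1,a_4=(56),a_5=(67),a_{1'}=(14)$. Let $G_L=\langle(12),(23),(34),(67),(57)X_1(57)\rangle$ (index 12 in $H_1$). The 12 right cosets of $G_L$ in $H_1$ are labeled as follows: the coset labeled $\sigma$ is $G_L\beta_\sigma$, where $\beta_\sigma\in H_1$ satisfies $\beta_\sigma\vec x=u_\sigma$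 for all $\vec x\in V$, with $u_6=(A,B,C,D,G,F,E)$, $u_5=(A,B,C,D,F,E,G)$, $u_4=(A,B,C,D,E,F,G)$, $u_3=(A,1+A-E,1+A-F,1+A-G,1+A-D,1+A-B,1+A-C)$, $u_2=(A,1+A-E,1+A-F,1+A-G,1+A-C,1+A-B,1+A-D)$, $u_1=(A,1+A-E,1+A-F,1+A-G,1+A-B,1+A-C,1+A-D)$, $u_{\overline6}=(1-A,1-B,1-C,1-D,2-G,2-F,2-E)$, $u_{\overline5}=(1-A,1-B,1-C,1-D,2-F,2-E,2-G)$, $u_{\overline4}=(1-A,1-B,1-C,1-D,2-E,2-F,2-G)$, $u_{\overline3}=(1-A,E-A,F-A,G-A,1+D-A,1+B-A,1+C-A)$, $u_{\overline2}=(1-A,E-A,F-A,G-A,1+C-A,1+B-A,1+D-A)$, $u_{\overline1}=(1-A,E-A,F-A,G-A,1+B-A,1+C-A,1+D-A)$ (all transposed to column vectors). An involution $s\in H_1$ acts by $s(G_L\beta)=G_L\beta s$. *)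

(* Defs.v *)
From HB Require Import structures.
From mathcomp Require Import all_boot all_order all_algebra all_fingroup.
Set Implicit Arguments. Unset Strict Implicit. Unset Printing Implicit Defensive.
Import Order.TTheory GRing.Theory Num.Theory.
Local Open Scope ring_scope.

Section Defs.
Variable C : numClosedFieldType.

(* the k-th coordinate (0-based) of a column vector of C^7:
   coordinates 0..6 are A,B,C,D,E,F,G *)
Definition co (x : 'cV[C]_7) (k : nat) : C := x (@inord 6 k) ord0.

Definition vec7 (l : seq C) : 'cV[C]_7 := \col_(i < 7) nth 0 l i.

Definition inV (x : 'cV[C]_7) : Prop :=
  co x 4 + co x 5 + co x 6 - co x 0 - co x 1 - co x 2 - co x 3 = 1.

(* transposition (i j) (1-based, as in the paper) as a 7x7 permutation matrix *)
Definition tr (i j : nat) : 'M[C]_7 := tperm_mx (@inord 6 i.-1) (@inord 6 j.-1).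

Definition X1_rows : seq (seq int) :=
  [:: [:: 1; 0; 0; 0; 0; 0; 0];
      [:: 0; 0; -1; 0; 1; 0; 0];
      [:: 0; -1; 0; 0; 1; 0; 0];
      [:: 0; 0; 0; 1; 0; 0; 0];
      [:: 0; 0; 0; 0; 1; 0; 0];
      [:: 0; -1; -1; 0; 1; 1; 0];
      [:: 0; -1; -1; 0; 1; 0; 1]]%R.
Definition X1 : 'M[C]_7 :=
  \matrix_(i < 7, j < 7) ((nth 0 (nth [::] X1_rows i) j)%:~R : C).

Inductive gen_by (S : seq 'M[C]_7) : 'M[C]_7 -> Prop :=
| gen_one : gen_by S 1%:M
| gen_mul : forall A s, gen_by S A -> s \in S -> gen_by S (A *m s)
| gen_mulV : forall A s, gen_by S A -> s \in S -> gen_by S (A *m invmx s).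

Definition H1 : 'M[C]_7 -> Prop :=
  gen_by [:: tr 1 2; tr 2 3; tr 3 4; tr 5 6; tr 6 7; X1].

Definition GL_ : 'M[C]_7 -> Prop :=
  gen_by [:: tr 1 2; tr 2 3; tr 3 4; tr 6 7; tr 5 7 *m X1 *m tr 5 7].

(* Coxeter generators a_1..a_5 (index k : 'I_5 stands for a_{k+1}) and a_{1'} *)
Definition a_gen (k : 'I_5) : 'M[C]_7 := nth 0 [:: tr 2 3; tr 3 4; X1; tr 5 6; tr 6 7] k.
Definition a_1' : 'M[C]_7 := tr 1 4.

Definition same_rcoset (G : 'M[C]_7 -> Prop) (A B : 'M[C]_7) : Prop :=
  exists g, G g /\ A = g *m B.

(* Labels: (false, i) is the label i+1, (true, i) is the label \overline{i+1}. *)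
Definition label := (bool * 'I_6)%type.

Definition u (s : label) (x : 'cV[C]_7) : 'cV[C]_7 :=
  let A := co x 0 in let B := co x 1 in let C' := co x 2 in let D := co x 3 in
  let E := co x 4 in let F := co x 5 in let G := co x 6 in
  match s.1, val s.2 with
  | false, 5 => vec7 [:: A; B; C'; D; G; F; E]
  | false, 4 => vec7 [:: A; B; C'; D; F; E; G]
  | false, 3 => vec7 [:: A; B; C'; D; E; F; G]
  | false, 2 => vec7 [:: A; 1+A-E; 1+A-F; 1+A-G; 1+A-D; 1+A-B; 1+A-C']
  | false, 1 => vec7 [:: A; 1+A-E; 1+A-F; 1+A-G; 1+A-C'; 1+A-B; 1+A-D]
  | false, _ => vec7 [:: A; 1+A-E; 1+A-F; 1+A-G; 1+A-B; 1+A-C'; 1+A-D]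
  | true, 5 => vec7 [:: 1-A; 1-B; 1-C'; 1-D; 2-G; 2-F; 2-E]
  | true, 4 => vec7 [:: 1-A; 1-B; 1-C'; 1-D; 2-F; 2-E; 2-G]
  | true, 3 => vec7 [:: 1-A; 1-B; 1-C'; 1-D; 2-E; 2-F; 2-G]
  | true, 2 => vec7 [:: 1-A; E-A; F-A; G-A; 1+D-A; 1+B-A; 1+C'-A]
  | true, 1 => vec7 [:: 1-A; E-A; F-A; G-A; 1+C'-A; 1+B-A; 1+D-A]
  | true, _ => vec7 [:: 1-A; E-A; F-A; G-A; 1+B-A; 1+C'-A; 1+D-A]
  end.

Definition is_beta (s : label) (b : 'M[C]_7) : Prop :=
  H1 b /\ forall x : 'cV[C]_7, inV x -> b *m x = u s x.

End Defs.

Definition act_a (k : 'I_5) (s : label) : label :=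
  if val s.2 == val k then (s.1, @inord 5 k.+1)
  else if val s.2 == k.+1 then (s.1, @inord 5 k)
  else s.

Definition act_a1' (s : label) : label :=
  match s.1, val s.2 with
  | false, 0 => (true, @inord 5 1)
  | true, 1 => (false, @inord 5 0)
  | true, 0 => (false, @inord 5 1)
  | false, 1 => (true, @inord 5 0)
  | _, _ => s
  end.

(* Main.v *)
Require Import Defs.
From HB Require Import structures.
From mathcomp Require Import all_boot all_order all_algebra all_fingroup.
From mathcomp Require Import ring zify.
Import Order.TTheory GRing.Theory Num.Theory.
Local Open Scope ring_scope.
Set Implicit Arguments. Unset Strict Implicit.

Definition L := seq (seq int).
Definition ent (l : L) (i j : nat) : int := nth 0 (nth [::] l i) j.
Definition dotL (a b : L) (i k : nat) : int :=
  foldr (fun j acc => ent a i j * ent b j k + acc) 0 (iota 0 7).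
Definition mulL (a b : L) : L := mkseq (fun i => mkseq (fun k => dotL a b i k) 7) 7.
Definition IL : L := mkseq (fun i => mkseq (fun k => ((i == k) : int)) 7) 7.
Definition tpn (i j r : nat) := if r == i.-1 then j.-1 else if r == j.-1 then i.-1 else r.
Definition trL (i j : nat) : L := mkseq (fun r => mkseq (fun c => ((tpn i j r == c) : int)) 7) 7.

Definition Mlist' (b : bool) (i : nat) : L :=
  match b, i with
  | false, 0 => ([:: [:: 1; 0; 0; 0; 0; 0; 0]; [:: 0; -1; -1; -1; 0; 1; 1]; [:: 0; -1; -1; -1; 1; 0; 1]; [:: 0; -1; -1; -1; 1; 1; 0]; [:: 0; -2; -1; -1; 1; 1; 1]; [:: 0; -1; -2; -1; 1; 1; 1]; [:: 0; -1; -1; -2; 1; 1; 1]])%R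
  | false, 1 => ([:: [:: 1; 0; 0; 0; 0; 0; 0]; [:: 0; -1; -1; -1; 0; 1; 1]; [:: 0; -1; -1; -1; 1; 0; 1]; [:: 0; -1; -1; -1; 1; 1; 0]; [:: 0; -1; -2; -1; 1; 1; 1]; [:: 0; -2; -1; -1; 1; 1; 1]; [:: 0; -1; -1; -2; 1; 1; 1]])%R
  | false, 2 => ([:: [:: 1; 0; 0; 0; 0; 0; 0]; [:: 0; -1; -1; -1; 0; 1; 1]; [:: 0; -1; -1; -1; 1; 0; 1]; [:: 0; -1; -1; -1; 1; 1; 0]; [:: 0; -1; -1; -2; 1; 1; 1]; [:: 0; -2; -1; -1; 1; 1; 1]; [:: 0; -1; -2; -1; 1; 1; 1]])%R
  | false, 3 => ([:: [:: 1; 0; 0; 0; 0; 0; 0]; [:: 0; 1; 0; 0; 0; 0; 0]; [:: 0; 0; 1; 0; 0; 0; 0]; [:: 0; 0; 0; 1; 0; 0; 0]; [:: 0; 0; 0; 0; 1; 0; 0]; [:: 0; 0; 0; 0; 0; 1; 0]; [:: 0; 0; 0; 0; 0; 0; 1]])%R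
  | false, 4 => ([:: [:: 1; 0; 0; 0; 0; 0; 0]; [:: 0; 1; 0; 0; 0; 0; 0]; [:: 0; 0; 1; 0; 0; 0; 0]; [:: 0; 0; 0; 1; 0; 0; 0]; [:: 0; 0; 0; 0; 0; 1; 0]; [:: 0; 0; 0; 0; 1; 0; 0]; [:: 0; 0; 0; 0; 0; 0; 1]])%R
  | false, _ => ([:: [:: 1; 0; 0; 0; 0; 0; 0]; [:: 0; 1; 0; 0; 0; 0; 0]; [:: 0; 0; 1; 0; 0; 0; 0]; [:: 0; 0; 0; 1; 0; 0; 0]; [:: 0; 0; 0; 0; 0; 0; 1]; [:: 0; 0; 0; 0; 0; 1; 0]; [:: 0; 0; 0; 0; 1; 0; 0]])%R
  | true, 0 => ([:: [:: -2; -1; -1; -1; 1; 1; 1]; [:: -1; 0; 0; 0; 1; 0; 0]; [:: -1; 0; 0; 0; 0; 1; 0]; [:: -1; 0; 0; 0; 0; 0; 1]; [:: -2; 0; -1; -1; 1; 1; 1]; [:: -2; -1; 0; -1; 1; 1; 1]; [:: -2; -1; -1; 0; 1; 1; 1]])%R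
  | true, 1 => ([:: [:: -2; -1; -1; -1; 1; 1; 1]; [:: -1; 0; 0; 0; 1; 0; 0]; [:: -1; 0; 0; 0; 0; 1; 0]; [:: -1; 0; 0; 0; 0; 0; 1]; [:: -2; -1; 0; -1; 1; 1; 1]; [:: -2; 0; -1; -1; 1; 1; 1]; [:: -2; -1; -1; 0; 1; 1; 1]])%R
  | true, 2 => ([:: [:: -2; -1; -1; -1; 1; 1; 1]; [:: -1; 0; 0; 0; 1; 0; 0]; [:: -1; 0; 0; 0; 0; 1; 0]; [:: -1; 0; 0; 0; 0; 0; 1]; [:: -2; -1; -1; 0; 1; 1; 1]; [:: -2; 0; -1; -1; 1; 1; 1]; [:: -2; -1; 0; -1; 1; 1; 1]])%R
  | true, 3 => ([:: [:: -2; -1; -1; -1; 1; 1; 1]; [:: -1; -2; -1; -1; 1; 1; 1]; [:: -1; -1; -2; -1; 1; 1; 1]; [:: -1; -1; -1; -2; 1; 1; 1]; [:: -2; -2; -2; -2; 1; 2; 2]; [:: -2; -2; -2; -2; 2; 1; 2]; [:: -2; -2; -2; -2; 2; 2; 1]])%R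
  | true, 4 => ([:: [:: -2; -1; -1; -1; 1; 1; 1]; [:: -1; -2; -1; -1; 1; 1; 1]; [:: -1; -1; -2; -1; 1; 1; 1]; [:: -1; -1; -1; -2; 1; 1; 1]; [:: -2; -2; -2; -2; 2; 1; 2]; [:: -2; -2; -2; -2; 1; 2; 2]; [:: -2; -2; -2; -2; 2; 2; 1]])%R
  | true, _ => ([:: [:: -2; -1; -1; -1; 1; 1; 1]; [:: -1; -2; -1; -1; 1; 1; 1]; [:: -1; -1; -2; -1; 1; 1; 1]; [:: -1; -1; -1; -2; 1; 1; 1]; [:: -2; -2; -2; -2; 2; 2; 1]; [:: -2; -2; -2; -2; 2; 1; 2]; [:: -2; -2; -2; -2; 1; 2; 2]])%R
  end.
Definition Mlist (s : label) : L := Mlist' s.1 (val s.2).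

Definition hw (s : label) : seq nat :=
  match s.1, val s.2 with
  | false, 0 => [:: 5; 2; 1; 3; 4; 5; 2; 3; 5]
  | false, 1 => [:: 3; 5; 2; 1; 3; 4; 5; 2; 3; 5]
  | false, 2 => [:: 3; 4; 5; 2; 1; 3; 4; 5; 2; 3; 5]
  | false, 3 => [:: ]
  | false, 4 => [:: 3]
  | false, _ => [:: 3; 4; 3]
  | true, 0 => [:: 0; 1; 4; 5; 0; 1; 2; 3; 4; 5; 2; 3; 4; 5; 0]
  | true, 1 => [:: 0; 2; 5; 2; 1; 3; 4; 5; 0; 1; 3; 5; 0; 2]
  | true, 2 => [:: 0; 2; 5; 2; 1; 3; 4; 5; 0; 1; 3; 5; 0]
  | true, 3 => [:: 0; 1; 3; 4; 3; 5; 0; 2; 1; 3; 4; 5; 0; 2; 3; 4; 5; 0; 2; 3; 5; 2]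
  | true, 4 => [:: 0; 1; 4; 3; 5; 0; 2; 1; 3; 4; 5; 0; 2; 3; 4; 5; 0; 2; 3; 5; 2]
  | true, _ => [:: 0; 1; 5; 0; 2; 1; 3; 4; 5; 0; 2; 3; 4; 5; 0; 2; 3; 5; 2]
  end.

Definition gw (k : nat) (s : label) : seq nat :=
  match k with
  | 0 => match s.1, val s.2 with
    | false, 0 => [:: ]
    | false, 1 => [:: ]
    | false, 2 => [:: 3]
    | false, 3 => [:: 1]
    | false, 4 => [:: 1]
    | false, _ => [:: 1]
    | true, 0 => [:: ]
    | true, 1 => [:: ]
    | true, 2 => [:: 3]
    | true, 3 => [:: 1]
    | true, 4 => [:: 1]
    | true, _ => [:: 1]
    end
  | 1 => match s.1, val s.2 with
    | false, 0 => [:: 3]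
    | false, 1 => [:: ]
    | false, 2 => [:: ]
    | false, 3 => [:: 2]
    | false, 4 => [:: 2]
    | false, _ => [:: 2]
    | true, 0 => [:: 3]
    | true, 1 => [:: ]
    | true, 2 => [:: ]
    | true, 3 => [:: 2]
    | true, 4 => [:: 2]
    | true, _ => [:: 2]
    end
  | 2 => match s.1, val s.2 with
    | false, 0 => [:: 1; 2; 4; 2; 1]
    | false, 1 => [:: 1; 2; 4; 2; 1]
    | false, 2 => [:: 2; 3; 4; 2; 1; 3; 4; 2]
    | false, 3 => [:: 1; 2; 1; 3; 4; 2; 3; 4]
    | false, 4 => [:: 3; 4; 3]
    | false, _ => [:: 4]
    | true, 0 => [:: 1; 2; 4; 2; 1]
    | true, 1 => [:: 1; 2; 4; 2; 1]
    | true, 2 => [:: 2; 3; 4; 2; 1; 3; 4; 2]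
    | true, 3 => [:: 1; 2; 1; 3; 4; 2; 3; 4]
    | true, 4 => [:: 3; 4; 3]
    | true, _ => [:: 4]
    end
  | 3 => match s.1, val s.2 with
    | false, 0 => [:: 1]
    | false, 1 => [:: 1]
    | false, 2 => [:: 1]
    | false, 3 => [:: ]
    | false, 4 => [:: ]
    | false, _ => [:: 3]
    | true, 0 => [:: 1]
    | true, 1 => [:: 1]
    | true, 2 => [:: 1]
    | true, 3 => [:: ]
    | true, 4 => [:: ]
    | true, _ => [:: 3]
    end
  | _ => match s.1, val s.2 with
    | false, 0 => [:: 2]
    | false, 1 => [:: 2]
    | false, 2 => [:: 2]
    | false, 3 => [:: 3]
    | false, 4 => [:: 3]
    | false, _ => [:: 3]
    | true, 0 => [:: 2]
    | true, 1 => [:: 2]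
    | true, 2 => [:: 2]
    | true, 3 => [:: 3]
    | true, 4 => [:: 3]
    | true, _ => [:: 3]
    end
  end.

Definition g1w (s : label) : seq nat :=
  match s.1, val s.2 with
  | false, 0 => [:: 0; 1; 4; 0; 2; 1; 4; 2]
  | false, 1 => [:: 0; 1; 4; 0; 2; 1; 4; 2]
  | false, 2 => [:: 4; 0; 2; 3; 4; 0; 2; 3; 4]
  | false, 3 => [:: 0; 1; 2; 1; 0]
  | false, 4 => [:: 0; 1; 2; 1; 0]
  | false, _ => [:: 0; 1; 2; 1; 0]
  | true, 0 => [:: 0; 1; 4; 0; 2; 1; 4; 2]
  | true, 1 => [:: 0; 1; 4; 0; 2; 1; 4; 2]
  | true, 2 => [:: 4; 0; 2; 3; 4; 0; 2; 3; 4]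
  | true, 3 => [:: 0; 1; 2; 1; 0]
  | true, 4 => [:: 0; 1; 2; 1; 0]
  | true, _ => [:: 0; 1; 2; 1; 0]
  end.

Section S.
Variable C : numClosedFieldType.
Definition mx (l : L) : 'M[C]_7 := \matrix_(i < 7, j < 7) ((ent l i j)%:~R : C).

Lemma X1E : X1 C = mx X1_rows. Proof. by []. Qed.

Lemma mxM a b : mx (mulL a b) = mx a *m mx b.
Proof.
apply/matrixP => i k; rewrite !mxE /ent /mulL nth_mkseq // nth_mkseq // /dotL /=.
rewrite !big_ord_recl big_ord0 !mxE /=.
by rewrite !rmorphD !rmorphM /= addr0.
Qed.

Lemma mx1 : mx IL = 1%:M.
Proof.
apply/matrixP => i k; rewrite !mxE /ent /IL nth_mkseq // nth_mkseq //.
Qed.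

Lemma trE (i j : nat) : (0 < i <= 7)%N -> (0 < j <= 7)%N -> tr C i j = mx (trL i j).
Proof.
move=> /andP[i0 i7] /andP[j0 j7].
have Hi : (i.-1 < 7)%N by case: i i0 i7.
have Hj : (j.-1 < 7)%N by case: j j0 j7.
apply/matrixP => r c; rewrite /tr /tperm_mx !mxE /ent /trL nth_mkseq // nth_mkseq //.
rewrite -val_eqE.
have -> : val (tperm (inord i.-1 : 'I_7) (inord j.-1) r) = tpn i j r.
  rewrite permE /= /tpn.
  have -> : (r == inord i.-1 :> 'I_7) = (val r == i.-1) by rewrite -val_eqE /= inordK.
  have -> : (r == inord j.-1 :> 'I_7) = (val r == j.-1) by rewrite -val_eqE /= inordK.
  by case: ifP => _; [rewrite inordK | case: ifP => _; [rewrite inordK|]].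
by case: (_ == _).
Qed.

Definition ell (y : 'cV[C]_7) : C :=
  co y 4 + co y 5 + co y 6 - co y 0 - co y 1 - co y 2 - co y 3.

Lemma coD (a b : 'cV[C]_7) k : co (a + b) k = co a k + co b k.
Proof. by rewrite /co mxE. Qed.
Lemma coZ (c : C) (a : 'cV[C]_7) k : co (c *: a) k = c * co a k.
Proof. by rewrite /co mxE. Qed.
Lemma coN (a : 'cV[C]_7) k : co (- a) k = - co a k.
Proof. by rewrite /co mxE. Qed.

Lemma ellD a b : ell (a + b) = ell a + ell b.
Proof. rewrite /ell !coD; ring. Qed.
Lemma ellZ c a : ell (c *: a) = c * ell a.
Proof. rewrite /ell !coZ; ring. Qed.
Lemma ellN a : ell (- a) = - ell a.
Proof. rewrite /ell !coN; ring. Qed.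

Definition x0 : 'cV[C]_7 := vec7 [:: 0; 0; 0; 0; 1; 0; 0].

Lemma co_vec7 (l : seq C) k : (k < 7)%N -> co (vec7 l) k = nth 0 l k.
Proof. by move=> Hk; rewrite /co /vec7 mxE inordK. Qed.

Lemma ellx0 : ell x0 = 1.
Proof. by rewrite /ell /x0 !co_vec7 //=; ring. Qed.

Lemma uniqV (B M : 'M[C]_7) :
  (forall x, inV x -> B *m x = M *m x) -> B = M.
Proof.
move=> H.
have Hx0 : B *m x0 = M *m x0 by apply: H; rewrite /inV -/(ell x0) ellx0.
have H0 : forall z, ell z = 0 -> B *m z = M *m z.
  move=> z Hz.
  have := H (x0 + z); rewrite /inV -/(ell _) ellD Hz ellx0 addr0 => /(_ erefl).
  by rewrite !mulmxDr Hx0 => /addrI.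
have key : forall y : 'cV[C]_7, B *m y = M *m y.
  move=> y.
  have -> : y = ell y *: x0 + (y - ell y *: x0) by rewrite addrC subrK.
  set z := y - _.
  have Hz : ell z = 0 by rewrite /z ellD ellN ellZ ellx0 mulr1 subrr.
  by rewrite (mulmxDr B) (mulmxDr M) -!scalemxAr Hx0 (H0 z Hz).
apply/matrixP => i j.
have := key (delta_mx j ord0); rewrite -!colE => /matrixP/(_ i ord0).
by rewrite !mxE.
Qed.

Lemma xE (x : 'cV[C]_7) :
  x = vec7 [:: co x 0; co x 1; co x 2; co x 3; co x 4; co x 5; co x 6].
Proof.
apply/matrixP => i j; rewrite ord1 !mxE /co.
by case: i => [[|[|[|[|[|[|[|i]]]]]]] Hi] //=; congr (x _ _); apply/val_inj; rewrite /= inordK.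
Qed.

Definition wmat (G : seq L) (w : seq nat) : L :=
  foldl (fun acc i => mulL acc (nth [::] G i)) IL w.

Lemma gen_word (G : seq L) (S : seq 'M[C]_7) w :
  map mx G = S -> all (fun i => i < size G)%N w -> gen_by S (mx (wmat G w)).
Proof.
move=> HS; elim/last_ind: w => [|w i IH]; first by rewrite /wmat /= mx1; constructor.
rewrite all_rcons => /andP[Hi Hw].
rewrite /wmat foldl_rcons -/(wmat G w) mxM.
apply: gen_mul; first exact: IH.
by rewrite -HS -(nth_map [::] 0) ?mem_nth ?size_map.
Qed.

Definition H1L : seq L := [:: trL 1 2; trL 2 3; trL 3 4; trL 5 6; trL 6 7; X1_rows].
Definition GLL : seq L := [:: trL 1 2; trL 2 3; trL 3 4; trL 6 7; mulL (mulL (trL 5 7) X1_rows) (trL 5 7)].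
Definition AL (k : nat) : L := nth [::] [:: trL 2 3; trL 3 4; X1_rows; trL 5 6; trL 6 7] k.

Lemma H1LE : map mx H1L = [:: tr C 1 2; tr C 2 3; tr C 3 4; tr C 5 6; tr C 6 7; X1 C].
Proof. by rewrite /= !trE. Qed.
Lemma GLLE : map mx GLL = [:: tr C 1 2; tr C 2 3; tr C 3 4; tr C 6 7; tr C 5 7 *m X1 C *m tr C 5 7].
Proof. by rewrite /= !mxM !trE. Qed.
Lemma ALE (k : 'I_5) : a_gen C k = mx (AL k).
Proof.
by case: k => [[|[|[|[|[|k]]]]] Hk]; rewrite /a_gen /AL /= ?trE //; move: Hk; rewrite !ltnS ltn0.
Qed.

Lemma Mspec s x : inV x -> mx (Mlist s) *m x = u s x.
Proof.
rewrite /inV => Hx; rewrite [in LHS](xE x) /u.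
move: Hx; generalize (co x 0) (co x 1) (co x 2) (co x 3) (co x 4) (co x 5) (co x 6).
move=> a b c d e f g Hx.
have He : e = 1 + a + b + c + d - f - g by rewrite -Hx; ring.
subst e.
case: s => [[] [[|[|[|[|[|[|i]]]]]] Hi]]; try (exfalso; lia).
all: apply/matrixP => r q; rewrite ord1 !mxE !big_ord_recl big_ord0 !mxE /=.
all: case: r => [[|[|[|[|[|[|[|r]]]]]]] Hr] /=; try (exfalso; lia).
all: rewrite /ent /=; ring.
Qed.
End S.

Lemma checkH (s : label) :
  (Mlist s == wmat H1L (hw s)) && all (fun i => i < 6)%N (hw s).
Proof. case: s => [[] [[|[|[|[|[|[|i]]]]]] Hi]]; try (exfalso; lia); vm_compute; reflexivity. Qed.

Definition actn (k i : nat) : nat :=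
  if i == k then k.+1 else if i == k.+1 then k else i.

Lemma Mlist_act (k : 'I_5) (s : label) :
  Mlist (act_a k s) = Mlist' s.1 (actn k (val s.2)).
Proof.
have Hk := ltn_ord k.
rewrite /act_a /actn; case: ifP => _; first by rewrite /Mlist /= inordK.
case: ifP => _ //; by rewrite /Mlist /= inordK //; lia.
Qed.

Definition act1n (b : bool) (i : nat) : bool * nat :=
  match b, i with
  | false, 0 => (true, 1)
  | true, 1 => (false, 0)
  | true, 0 => (false, 1)
  | false, 1 => (true, 0)
  | _, _ => (b, i)
  end.

Lemma Mlist_act1 (s : label) :
  Mlist (act_a1' s) = Mlist' (act1n s.1 (val s.2)).1 (act1n s.1 (val s.2)).2.
Proof.
case: s => [[] [[|[|i]] Hi]]; by rewrite /act_a1' /Mlist /= ?inordK.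
Qed.

Lemma checkA (k : 'I_5) (s : label) :
  (mulL (Mlist s) (AL k) == mulL (wmat GLL (gw k s)) (Mlist' s.1 (actn k (val s.2))))
  && all (fun i => i < 5)%N (gw k s).
Proof.
case: k => [[|[|[|[|[|k]]]]] Hk]; try (exfalso; lia);
case: s => [[] [[|[|[|[|[|[|i]]]]]] Hi]]; try (exfalso; lia); vm_compute; reflexivity.
Qed.

Lemma check1 (s : label) :
  (mulL (Mlist s) (trL 1 4) ==
     mulL (wmat GLL (g1w s)) (Mlist' (act1n s.1 (val s.2)).1 (act1n s.1 (val s.2)).2))
  && all (fun i => i < 5)%N (g1w s).
Proof.
case: s => [[] [[|[|[|[|[|[|i]]]]]] Hi]]; try (exfalso; lia); vm_compute; reflexivity.
Qed.

Theorem proposition4p5 (C : numClosedFieldType) :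
  (forall s : label, exists b : 'M[C]_7, is_beta s b) /\
  (forall beta : label -> 'M[C]_7, (forall s, is_beta s (beta s)) ->
     (forall (k : 'I_5) (s : label),
        same_rcoset (@GL_ C) (beta s *m a_gen C k) (beta (act_a k s))) /\
     (forall s : label,
        same_rcoset (@GL_ C) (beta s *m a_1' C) (beta (act_a1' s)))).
Proof.
have bspec : forall s, is_beta s (mx C (Mlist s)).
  move=> s; split; last exact: Mspec.
  have /andP[/eqP E Hw] := checkH s.
  rewrite E; exact: gen_word (H1LE C) Hw.
split; first by move=> s; exists (mx C (Mlist s)).
move=> beta Hb.
have bE : forall s, beta s = mx C (Mlist s).
  by move=> s; apply: uniqV => x Hx; rewrite (Hb s).2 // Mspec.
split.
- move=> k s; rewrite !bE ALE Mlist_act.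
  have /andP[/eqP E Hw] := checkA k s.
  exists (mx C (wmat GLL (gw k s))); split; first exact: gen_word (GLLE C) Hw.
  by rewrite -!mxM E.
- move=> s; rewrite !bE /a_1' trE // Mlist_act1.
  have /andP[/eqP E Hw] := check1 s.
  exists (mx C (wmat GLL (g1w s))); split; first exact: gen_word (GLLE C) Hw.
  by rewrite -!mxM E.
Qed.
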